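(* Suppose $x_j(0)=y_j(0)=0$ for all individuals $j=1,\dots,n$, and let $i$ be an individual with $\alpha_i=\min_j\alpha_j$. If individual $i$ acts for the first time at time $t$, then every other individual has acted (for the first time) at some time $\le t$. Equivalently, an individual with larger $\alpha$ takes its first action no later than an individual with smaller $\alpha$.
   Context: Model: Fix an integer $n\ge 2$ (number of individuals) and parameters $\sigma_A,\sigma_S\ge 0$, $\sigma_C>0$, $\mu_S\in[0,1]$, $\mu_C>0$, $r>0$, $\tau\in(0,1)$, $\alpha_1,\dots,\alpha_n\in(-1,1)$. Individual $i$ has state $(x_i(t),y_i(t))$, $x_i\in(-1,1)$, $y_i\in[0,1]$, and $\gamma_i(t)=\frac{1}{n-1}\sum_{j\neq i}y_j(t)$. Between action events the state evolves by $\dot x_i=[\sigma_A\alpha_i+\sigma_S(\gamma_i-\mu_S)]\,\sigma_C(\gamma_i+\mu_C)(1-x_i)(1+x_i)$, $\dot y_i=-ry_i$. Individual $i$ ''acts'' at a time $t$ when $x_i(t)$ reaches the threshold $\tau$ (i.e. $x_i(t)\ge\tau$); immediately afterwards $x_i$ is reset to $0$ and $y_i$ is reset to $1$, and the continuous evolution resumes from the new state. *)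

(* Defs.v *)
From Stdlib Require Import Reals Lra List.
From Coquelicot Require Import Coquelicot.
Open Scope R_scope.

(* Individuals are indexed by natural numbers 0 <= j < n.
   A state trajectory is given by X Y : nat -> R -> R,
   X j t = x_j(t), Y j t = y_j(t) (post-reset values at action times). *)

Definition sum_others (n : nat) (Y : nat -> R -> R) (i : nat) (t : R) : R :=
  fold_right Rplus 0
    (map (fun j => if Nat.eq_dec j i then 0 else Y j t) (seq 0 n)).

Definition gamma (n : nat) (Y : nat -> R -> R) (i : nat) (t : R) : R :=
  / (INR n - 1) * sum_others n Y i t.

Definition xdot (sA sS sC muS muC ai g x : R) : R :=
  (sA * ai + sS * (g - muS)) * sC * (g + muC) * (1 - x) * (1 + x).

Definition right_deriv (f : R -> R) (t l : R) : Prop :=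
  filterlim (fun h => (f (t + h) - f t) / h) (at_right 0) (locally l).

(* individual i acts at time t > 0: x_i reaches the threshold tau from
   below as s -> t^- (the value X i t is then the post-reset value) *)
Definition acts (X : nat -> R -> R) (tau : R) (i : nat) (t : R) : Prop :=
  0 < t /\ filterlim (X i) (at_left t) (locally tau).

(* (X, Y) is a trajectory of the hybrid model on [0, +oo):
   - states stay in the model's state space, with x_i < tau (whenever x_i
     reaches tau it is immediately reset);
   - for t >= 0, x_i and y_i have right derivatives given by the ODE at the
     current (post-reset) state;
   - for t > 0, either x_i, y_i are left-continuous at t (no action), or
     x_i(s) -> tau as s -> t^- and the state is reset: x_i(t)=0, y_i(t)=1. *)
Definition is_solution (n : nat) (sA sS sC muS muC r tau : R)
    (alpha : nat -> R) (X Y : nat -> R -> R) : Prop :=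
  forall i, (i < n)%nat ->
  (forall t, 0 <= t ->
     -1 < X i t < tau /\ 0 <= Y i t <= 1 /\
     right_deriv (X i) t (xdot sA sS sC muS muC (alpha i) (gamma n Y i t) (X i t)) /\
     right_deriv (Y i) t (- r * Y i t)) /\
  (forall t, 0 < t ->
     (filterlim (X i) (at_left t) (locally (X i t)) /\
      filterlim (Y i) (at_left t) (locally (Y i t)))
     \/
     (filterlim (X i) (at_left t) (locally tau) /\ X i t = 0 /\ Y i t = 1)).

(* Main.v *)
Require Import Defs.
From Stdlib Require Import Reals Lra List Lia Classical.
From Coquelicot Require Import Coquelicot.
Open Scope R_scope.
Lemma ballR (x y : R) (e : posreal) : ball x e y <-> Rabs (y - x) < e.
Proof. reflexivity. Qed.
Lemma flR {T} (F : (T -> Prop) -> Prop) {FF : Filter F} (f : T -> R) y :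
  filterlim f F (locally y) <-> (forall eps, 0 < eps -> F (fun x => Rabs (f x - y) < eps)).
Proof.
  rewrite filterlim_locally. split.
  - intros H eps He. apply (H (mkposreal eps He)).
  - intros H eps. apply (H eps (cond_pos eps)).
Qed.
Lemma atl_ex s P : at_left s P -> exists d, 0 < d /\ forall u, s - d < u < s -> P u.
Proof.
  intros [e He]. exists e. split. apply cond_pos. intros u Hu. apply He.
  apply ballR. apply Rabs_def1; lra. lra.
Qed.
Lemma atl_mk s P d : 0 < d -> (forall u, s - d < u < s -> P u) -> at_left s P.
Proof.
  intros Hd H. exists (mkposreal d Hd). intros u Hu Hlt. apply ballR in Hu. simpl in Hu.
  apply H. apply Rabs_def2 in Hu. destruct Hu as [H0 H1]. unfold minus, plus, opp in *; simpl in *. lra.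
Qed.
Lemma atr_ex P : at_right 0 P -> exists d, 0 < d /\ forall h, 0 < h < d -> P h.
Proof.
  intros [e He]. exists e. split. apply cond_pos. intros u Hu. apply He.
  apply ballR. apply Rabs_def1; lra. lra.
Qed.

Lemma rd_step f s l e : right_deriv f s l -> 0 < e ->
  exists d, 0 < d /\ forall h, 0 < h < d -> f (s + h) - f s < h * (l + e).
Proof.
  intros H He. unfold right_deriv in H. pose proof (proj1 (flR _ _ _) H e He) as H'. clear H. rename H' into H.
  apply atr_ex in H. destruct H as [d [Hd H]]. exists d. split; auto.
  intros h Hh. specialize (H h Hh). apply Rabs_def2 in H. destruct H as [H1 H2].
  assert (E : f (s + h) - f s = h * ((f (s + h) - f s) / h)) by (field; lra).
  rewrite E. apply Rmult_lt_compat_l; lra.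
Qed.

Lemma cmp (f D : R -> R) (a b K : R) :
 a <= b -> 0 <= K -> f a <= 0 ->
 (forall s, a < s <= b -> filterlim f (at_left s) (locally (f s))) ->
 (forall s, a <= s < b -> right_deriv f s (D s)) ->
 (forall s, a <= s < b -> 0 < f s -> D s <= K * f s) ->
 f b <= 0.
Proof.
  intros Hab HK Ha Hlc Hrd Hbd.
  destruct (Rle_or_lt (f b) 0) as [Hb|Hb]; auto. exfalso.
  set (E := exp ((K+1)*(b-a))).
  assert (HE : 0 < E) by apply exp_pos.
  set (eps := f b / (2*E)).
  assert (Heps : 0 < eps) by (unfold eps; apply Rdiv_lt_0_compat; lra).
  set (phi := fun s => eps * exp ((K+1)*(s-a))).
  assert (Hphi : forall s, 0 < phi s) by (intros; unfold phi; apply Rmult_lt_0_compat; [lra| apply exp_pos]).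
  assert (Hmono : forall x y, x <= y -> phi x <= phi y).
  { intros x y Hxy. unfold phi. apply Rmult_le_compat_l; [lra|].
    destruct (Req_dec x y) as [->|Hne]; [lra|]. left. apply exp_increasing. nra. }
  assert (Hphib : phi b = f b / 2) by (unfold phi, eps, E; field; apply Rgt_not_eq, exp_pos).
  assert (Hshift : forall s h, phi (s + h) = phi s * exp ((K+1)*h)).
  { intros s h. unfold phi. rewrite Rmult_assoc, <- exp_plus. f_equal. f_equal. ring. }
  set (S := fun s => a <= s <= b /\ f s <= phi s).
  destruct (completeness S) as [c [Hub Hlub]].
  { exists b. intros x [Hx _]. lra. }
  { exists a. split. lra. specialize (Hphi a). lra. }
  assert (Hac : a <= c) by (apply Hub; split; [lra| specialize (Hphi a); lra]).
  assert (Hcb : c <= b) by (apply Hlub; intros x [Hx _]; lra).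
  assert (Hc : f c <= phi c).
  { destruct (Rle_or_lt (f c) (phi c)) as [H|H]; auto. exfalso.
    assert (Hac' : a < c).
    { destruct Hac as [Hac|Hac]; auto. subst c. specialize (Hphi a). lra. }
    specialize (Hlc c (conj Hac' Hcb)).
    pose proof (proj1 (flR _ _ _) Hlc (f c - phi c) ltac:(lra)) as Hlc'. clear Hlc. rename Hlc' into Hlc.
    apply atl_ex in Hlc. destruct Hlc as [d [Hd Hl]].
    set (d' := Rmin d (c - a)).
    assert (Hd' : 0 < d') by (unfold d'; apply Rmin_pos; lra).
    assert (Hd'd : d' <= d) by apply Rmin_l.
    assert (c <= c - d'/2); [|lra].
    apply Hlub. intros x [Hx Hfx].
    destruct (Rle_or_lt x (c - d'/2)) as [H1|H1]; auto. exfalso.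
    assert (Hxc : x <= c) by (apply Hub; split; auto).
    destruct Hxc as [Hxc|Hxc].
    - specialize (Hl x ltac:(lra)). apply Rabs_def2 in Hl. destruct Hl as [_ Hl].
      specialize (Hmono x c ltac:(lra)). lra.
    - subst x. lra. }
  assert (Hcb' : c < b).
  { destruct Hcb as [Hcb|Hcb]; auto. subst c. lra. }
  specialize (Hrd c (conj Hac Hcb')).
  assert (Hgoal : forall h, 0 < h < b - c -> f (c + h) <= phi (c + h) -> False).
  { intros h Hh Hfh. assert (c + h <= c); [|lra]. apply Hub. split; [lra|auto]. }
  destruct (Rle_or_lt (f c) 0) as [Hfc|Hfc].
  - set (M := Rabs (D c) + 1).
    assert (HM : 0 < M) by (unfold M; pose proof (Rabs_pos (D c)); lra).
    destruct (rd_step _ _ _ 1 Hrd ltac:(lra)) as [d [Hd Hst]].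
    set (h := Rmin (Rmin d (b - c)) (phi c / M) / 2).
    assert (Hh0 : 0 < Rmin (Rmin d (b - c)) (phi c / M)).
    { apply Rmin_pos. apply Rmin_pos; lra. apply Rdiv_lt_0_compat; auto. }
    assert (H1 : Rmin (Rmin d (b - c)) (phi c / M) <= Rmin d (b - c)) by apply Rmin_l.
    assert (H2 : Rmin (Rmin d (b - c)) (phi c / M) <= phi c / M) by apply Rmin_r.
    assert (H3 : Rmin d (b - c) <= d) by apply Rmin_l.
    assert (H4 : Rmin d (b - c) <= b - c) by apply Rmin_r.
    apply (Hgoal h); [unfold h; lra|].
    specialize (Hst h ltac:(unfold h; lra)).
    assert (Hhm : h * M <= phi c / 2).
    { unfold h. apply Rle_trans with (phi c / M / 2 * M).
      apply Rmult_le_compat_r; lra. right. field. lra. }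
    assert (HDc : D c + 1 <= M) by (unfold M; pose proof (Rle_abs (D c)); lra).
    assert (h * (D c + 1) <= h * M) by (apply Rmult_le_compat_l; unfold h; lra).
    specialize (Hmono c (c + h) ltac:(unfold h; lra)).
    specialize (Hphi c). lra.
  - specialize (Hbd c (conj Hac Hcb') Hfc).
    destruct (rd_step _ _ _ (phi c) Hrd (Hphi c)) as [d [Hd Hst]].
    set (h := Rmin d (b - c) / 2).
    assert (H3 : Rmin d (b - c) <= d) by apply Rmin_l.
    assert (H4 : Rmin d (b - c) <= b - c) by apply Rmin_r.
    assert (H5 : 0 < Rmin d (b - c)) by (apply Rmin_pos; lra).
    apply (Hgoal h); [unfold h; lra|].
    specialize (Hst h ltac:(unfold h; lra)).
    rewrite Hshift.
    assert (Hex : 1 + (K+1)*h < exp ((K+1)*h)).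
    { apply exp_ineq1. apply Rgt_not_eq. unfold h. apply Rmult_lt_0_compat; lra. }
    assert (K * f c <= K * phi c) by (apply Rmult_le_compat_l; lra).
    assert (h * (D c + phi c) <= h * ((K+1) * phi c)) by (apply Rmult_le_compat_l; unfold h; lra).
    assert (phi c * (1 + (K+1)*h) <= phi c * exp ((K+1)*h)) by (apply Rmult_le_compat_l; [specialize (Hphi c)|]; lra).
    nra.
Qed.

Definition Fs (Y : nat -> R -> R) i t m len :=
  fold_right Rplus 0 (map (fun j => if Nat.eq_dec j i then 0 else Y j t) (seq m len)).
Definition Ts (Y : nat -> R -> R) t m len :=
  fold_right Rplus 0 (map (fun j => Y j t) (seq m len)).

Lemma Fs_T Y i t len : forall m,
  ((m <= i < m + len)%nat -> Fs Y i t m len + Y i t = Ts Y t m len) /\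
  (~(m <= i < m + len)%nat -> Fs Y i t m len = Ts Y t m len).
Proof.
  induction len as [|len IH]; intros m; unfold Fs, Ts in *; simpl.
  - split; intros; [lia|reflexivity].
  - destruct (IH (S m)) as [IH1 IH2].
    destruct (Nat.eq_dec m i) as [->|Hne]; split; intros H.
    + rewrite IH2 by lia. ring.
    + lia.
    + rewrite <- IH1 by lia. ring.
    + rewrite IH2 by lia. ring.
Qed.

Lemma Fs_bnd (Y : nat -> R -> R) i t len : forall m,
  (forall k, (m <= k < m + len)%nat -> 0 <= Y k t <= 1) ->
  0 <= Fs Y i t m len /\
  ((m <= i < m + len)%nat -> Fs Y i t m len <= INR len - 1) /\
  Fs Y i t m len <= INR len.
Proof.
  induction len as [|len IH]; intros m HY; unfold Fs in *; cbn [seq map fold_right].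
  - split; [lra|]. split; [intros; lia|simpl; lra].
  - destruct (IH (S m)) as [IH1 [IH2 IH3]].
    { intros k Hk. apply HY. lia. }
    assert (HYm : 0 <= Y m t <= 1) by (apply HY; lia).
    assert (Hl : INR (S len) = INR len + 1) by apply S_INR.
    assert (INR len >= 0) by (apply Rle_ge, pos_INR).
    destruct (Nat.eq_dec m i) as [->|Hne]; split.
    + lra.
    + split; [intros; lra| lra].
    + lra.
    + split; [intros|lra].
      specialize (IH2 ltac:(lia)). lra.
Qed.

Lemma fl_minus {T} (F : (T -> Prop) -> Prop) {FF : Filter F} (f g : T -> R) a b :
  filterlim f F (locally a) -> filterlim g F (locally b) ->
  filterlim (fun x => f x - g x) F (locally (a - b)).
Proof.
  intros Hf Hg. apply (proj2 (flR _ _ _)). intros e He.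
  pose proof (proj1 (flR _ _ _) Hf (e/2) ltac:(lra)) as H1.
  pose proof (proj1 (flR _ _ _) Hg (e/2) ltac:(lra)) as H2.
  generalize (filter_and _ _ H1 H2). apply filter_imp. intros x [Ha Hb].
  replace (f x - g x - (a - b)) with ((f x - a) - (g x - b)) by ring.
  eapply Rle_lt_trans. apply Rabs_triang. rewrite Rabs_Ropp. lra.
Qed.

Lemma rd_minus f g s a b : right_deriv f s a -> right_deriv g s b ->
  right_deriv (fun u => f u - g u) s (a - b).
Proof.
  unfold right_deriv. intros Hf Hg.
  eapply filterlim_ext; [|exact (fl_minus _ _ _ _ _ Hf Hg)].
  intros h. simpl. unfold Rdiv. ring.
Qed.

Lemma sum_eq n (Y : nat -> R -> R) i j u : (i < n)%nat -> (j < n)%nat -> Y i u = Y j u ->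
  sum_others n Y i u = sum_others n Y j u.
Proof.
  intros Hi Hj E. unfold sum_others.
  destruct (Fs_T Y i u n 0) as [A _]. destruct (Fs_T Y j u n 0) as [B _].
  unfold Fs in A, B. specialize (A ltac:(lia)). specialize (B ltac:(lia)). lra.
Qed.

Lemma gamma_bnd n (Y : nat -> R -> R) i u : (2 <= n)%nat -> (i < n)%nat ->
  (forall k, (k < n)%nat -> 0 <= Y k u <= 1) -> 0 <= gamma n Y i u <= 1.
Proof.
  intros Hn Hi HY. unfold gamma, sum_others.
  destruct (Fs_bnd Y i u n 0) as [B1 [B2 _]]. { intros k Hk. apply HY. lia. }
  unfold Fs in B1, B2. specialize (B2 ltac:(lia)).
  assert (H2 : INR 2 <= INR n) by (apply le_INR; lia). simpl in H2.
  assert (Hp : 0 < / (INR n - 1)) by (apply Rinv_0_lt_compat; lra).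
  split. apply Rmult_le_pos; lra.
  apply Rle_trans with (/ (INR n - 1) * (INR n - 1)).
  apply Rmult_le_compat_l; lra. right. field. lra.
Qed.

Lemma xdot_cmp sA sS sC muS muC ai aj g xi xj :
  0 <= sA -> 0 <= sS -> 0 < sC -> 0 <= muS <= 1 -> 0 < muC ->
  -1 < ai < 1 -> -1 < aj < 1 -> ai <= aj -> 0 <= g <= 1 ->
  -1 < xi < 1 -> -1 < xj < 1 -> xj < xi ->
  xdot sA sS sC muS muC ai g xi - xdot sA sS sC muS muC aj g xj
    <= (2 * ((sA + sS) * sC * (1 + muC))) * (xi - xj).
Proof.
  intros. unfold xdot.
  set (c := sC * (g + muC)).
  assert (Hc : 0 < c) by (unfold c; nra).
  assert (Hc1 : c <= sC * (1 + muC)) by (unfold c; nra).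
  set (Ai := (sA * ai + sS * (g - muS)) * c).
  set (Aj := (sA * aj + sS * (g - muS)) * c).
  assert (E1 : (sA * ai + sS * (g - muS)) * sC * (g + muC) * (1 - xi) * (1 + xi) = Ai * (1 - xi*xi))
    by (unfold Ai, c; ring).
  assert (E2 : (sA * aj + sS * (g - muS)) * sC * (g + muC) * (1 - xj) * (1 + xj) = Aj * (1 - xj*xj))
    by (unfold Aj, c; ring).
  rewrite E1, E2.
  assert (HAij : Ai <= Aj) by (unfold Ai, Aj; apply Rmult_le_compat_r; nra).
  assert (Hb : Rabs (sA * aj + sS * (g - muS)) <= sA + sS).
  { apply Rabs_le. split; nra. }
  assert (HAj : Rabs Aj <= (sA + sS) * (sC * (1 + muC))).
  { unfold Aj. rewrite Rabs_mult, (Rabs_right c) by lra.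
    apply Rmult_le_compat; auto using Rabs_pos; lra. }
  assert (Hx2 : 0 < 1 - xi*xi) by nra. assert (G1 : (Ai - Aj) * (1 - xi*xi) <= 0) by (clearbody Ai Aj c; nra).
  assert (G2 : Aj * (xj*xj - xi*xi) <= Rabs Aj * 2 * (xi - xj)).
  { replace (Aj * (xj*xj - xi*xi)) with ((- Aj * (xi + xj)) * (xi - xj)) by ring.
    apply Rmult_le_compat_r; [lra|].
    apply Rle_trans with (Rabs (- Aj * (xi + xj))). apply Rle_abs.
    rewrite Rabs_mult, Rabs_Ropp. apply Rmult_le_compat_l. apply Rabs_pos.
    left. apply Rabs_def1; lra. }
  assert (G3 : Rabs Aj * 2 * (xi - xj) <= 2 * ((sA + sS) * sC * (1 + muC)) * (xi - xj)) by (clearbody Ai Aj c; nra).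
  lra.
Qed.

Theorem proposition3
  (n : nat) (sA sS sC muS muC r tau : R) (alpha : nat -> R)
  (Hn : (2 <= n)%nat)
  (HsA : 0 <= sA) (HsS : 0 <= sS) (HsC : 0 < sC)
  (HmuS : 0 <= muS <= 1) (HmuC : 0 < muC) (Hr : 0 < r)
  (Htau : 0 < tau < 1)
  (Halpha : forall j, (j < n)%nat -> -1 < alpha j < 1)
  (X Y : nat -> R -> R)
  (Hsol : is_solution n sA sS sC muS muC r tau alpha X Y)
  (Hinit : forall j, (j < n)%nat -> X j 0 = 0 /\ Y j 0 = 0)
  (i : nat) (Hi : (i < n)%nat)
  (Hmin : forall j, (j < n)%nat -> alpha i <= alpha j)
  (t : R)
  (Hact : acts X tau i t)
  (Hfirst : forall s, 0 < s < t -> ~ acts X tau i s) :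
  forall j, (j < n)%nat -> j <> i ->
    exists s, 0 < s <= t /\ acts X tau j s.
Proof.
  intros j Hj Hji.
  destruct (classic (exists s, 0 < s <= t /\ acts X tau j s)) as [H|Hnj]; auto.
  exfalso.
  assert (Hnj' : forall s, 0 < s <= t -> ~ acts X tau j s) by (intros s Hs Ha; apply Hnj; eauto).
  clear Hnj.
  destruct Hact as [Ht Hlim].
  destruct (Hsol i Hi) as [Si1 Si2]. destruct (Hsol j Hj) as [Sj1 Sj2].
  assert (LCj : forall s, 0 < s <= t ->
    filterlim (X j) (at_left s) (locally (X j s)) /\ filterlim (Y j) (at_left s) (locally (Y j s))).
  { intros s Hs. destruct (Sj2 s ltac:(lra)) as [H|[H _]]; auto.
    exfalso. apply (Hnj' s Hs). split; [lra|exact H]. }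
  assert (LCi : forall s, 0 < s < t ->
    filterlim (X i) (at_left s) (locally (X i s)) /\ filterlim (Y i) (at_left s) (locally (Y i s))).
  { intros s Hs. destruct (Si2 s ltac:(lra)) as [H|[H _]]; auto.
    exfalso. apply (Hfirst s Hs). split; [lra|exact H]. }
  destruct (Hinit i Hi) as [Xi0 Yi0]. destruct (Hinit j Hj) as [Xj0 Yj0].
  assert (HY : forall s, 0 <= s < t -> Y i s = Y j s).
  { intros s Hs.
    assert (A1 : Y i s - Y j s <= 0).
    { apply (cmp (fun u => Y i u - Y j u) (fun u => - r * Y i u - - r * Y j u) 0 s 0); try lra.
      - intros u Hu. apply (fl_minus (at_left u)); [apply LCi|apply LCj]; lra.
      - intros u Hu. apply rd_minus; [apply Si1|apply Sj1]; lra.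
      - intros u Hu Hp. nra. }
    assert (A2 : Y j s - Y i s <= 0).
    { apply (cmp (fun u => Y j u - Y i u) (fun u => - r * Y j u - - r * Y i u) 0 s 0); try lra.
      - intros u Hu. apply (fl_minus (at_left u)); [apply LCj|apply LCi]; lra.
      - intros u Hu. apply rd_minus; [apply Sj1|apply Si1]; lra.
      - intros u Hu Hp. nra. }
    lra. }
  assert (HX : forall s, 0 <= s < t -> X i s <= X j s).
  { intros s Hs.
    assert (A1 : X i s - X j s <= 0); [|lra].
    apply (cmp (fun u => X i u - X j u)
      (fun u => xdot sA sS sC muS muC (alpha i) (gamma n Y i u) (X i u)
              - xdot sA sS sC muS muC (alpha j) (gamma n Y j u) (X j u))
      0 s (2 * ((sA + sS) * sC * (1 + muC)))); try lra.
    - assert (0 < sC * (1 + muC)) by nra. nra.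
    - intros u Hu. apply (fl_minus (at_left u)); [apply LCi|apply LCj]; lra.
    - intros u Hu. apply rd_minus; [apply Si1|apply Sj1]; lra.
    - intros u Hu Hp.
      assert (Hg : gamma n Y j u = gamma n Y i u).
      { unfold gamma. f_equal. symmetry. apply sum_eq; auto. apply HY. lra. }
      rewrite Hg.
      apply xdot_cmp; auto; try lra.
      + apply gamma_bnd; auto. intros k Hk. apply (Hsol k Hk). lra.
      + destruct (Si1 u ltac:(lra)) as [[? ?] _]. lra.
      + destruct (Sj1 u ltac:(lra)) as [[? ?] _]. lra. }
  apply (Hnj' t ltac:(lra)). split; [lra|].
  apply (proj2 (flR _ _ _)). intros e He.
  pose proof (proj1 (flR _ _ _) Hlim e He) as H1.
  assert (H2 : at_left t (fun u => 0 < u < t)).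
  { apply (atl_mk t _ t Ht). intros u Hu. lra. }
  generalize (filter_and _ _ H1 H2). apply filter_imp. intros u [Hu Hpos].
  specialize (HX u ltac:(lra)).
  destruct (Sj1 u ltac:(lra)) as [[_ Hjt] _].
  apply Rabs_def2 in Hu. destruct Hu.
  rewrite Rabs_left by lra. lra.
Qed.
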